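(* Let $P$ be a probability measure on $(\Omega,\mathcal A)$, let $\delta\in(\tfrac12,1)$, and let $\bar{\mathbf C}\subseteq\bar{\mathcal A}$ be a C-class. If $\bar T(P,\delta)\subseteq\bar{\mathbf C}$, then $\bar T(P,\delta)\sim\bar{\mathbf C}$; equivalently, $\bar M_{\bar{\mathbf C}}=\bar P$ on $\bar{\mathcal A}$.
   Context: Let $(\Omega,\mathcal A)$ be a measurable space. For $n\ge1$, $\mathcal A^n$ is the product $\sigma$-algebra on $\Omega^n$; the extended event space is $\bar{\mathcal A}=\bigcup_{n\ge1}\mathcal A^n$, events tagged by their level $n$ (written $A^{(n)}$). For $k\ge1$, $(\Omega^n)^k$ is identified with $\Omega^{nk}$ and $(\mathcal A^n)^k$ with $\mathcal A^{nk}$. For a probability measure $P$ on $\mathcal A$, $P^n$ is its $n$-fold product, $\bar P(A^{(n)})=P^n(A^{(n)})$, and $\bar T(P,\delta)=\{A\in\bar{\mathcal A}:\bar P(A)\ge\delta\}$. For $A^{(n)}\in\mathcal A^n$, an interval $I\subseteq[0,1]$ and $k\in\mathbb N^+$, $S(A^{(n)},I,k)=\{(\omega_1,\dots,\omega_k)\in(\Omega^n)^k:\frac1k\sum_{i=1}^k\chi_{A^{(n)}}(\omega_i)\in I\}$. A class $\bar{\mathbf C}\subseteq\bar{\mathcal A}$ is a C-class if for every $n$ the component $\mathcal C^{(n)}=\bar{\mathbf C}\cap\mathcal A^n$ satisfies: $\Omega^n\in\mathcal C^{(n)}$; if $A\in\mathcal C^{(n)}$, $B\in\mathcal A^n$,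 $A\subseteq B$ then $B\in\mathcal C^{(n)}$; $\mathcal C^{(n)}$ contains no two disjoint events. ''$S(A,I,k)\in\bar{\mathbf C}$ definitively'' means there is $k_0$ with $S(A,I,k)\in\bar{\mathbf C}$ for all $k>k_0$. The C-measure of a C-class is $\bar M_{\bar{\mathbf C}}(A)=\sup\{\sigma\in[0,1]: S(A,[\sigma,1],k)\in\bar{\mathbf C}\text{ definitively}\}$. Two C-classes are (asymptotically) equivalent, $\bar{\mathbf C}_1\sim\bar{\mathbf C}_2$, if $\bar M_{\bar{\mathbf C}_1}=\bar M_{\bar{\mathbf C}_2}$. *)

(* Defs.v *)
From HB Require Import structures.
From mathcomp Require Import all_boot all_order all_algebra.
From mathcomp Require Import all_classical all_reals all_analysis.
Set Implicit Arguments. Unset Strict Implicit. Unset Printing Implicit Defensive.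
Import Order.TTheory GRing.Theory Num.Theory.
Local Open Scope classical_set_scope.
Local Open Scope ring_scope.

(* Level-n events live in the measurable type n.-tuple T, equipped by
   mathcomp-analysis with the product sigma-algebra (generated by the
   coordinate projections).  Levels n >= 1 are the meaningful ones. *)

Fixpoint prodP d (T : measurableType d) (R : realType)
  (P : probability T R) (n : nat) : set (n.-tuple T) -> \bar R :=
  match n as m return set (m.-tuple T) -> \bar R with
  | 0 => fun A => ((\1_A [tuple] : R)%:E)
  | m.+1 => fun A =>
      (\int[P]_x prodP P [set t : m.-tuple T | A (cons_tuple x t)])%E
  end.

(* index of coordinate j of block i in the identification
   (Omega^n)^k = Omega^(n k) (blocks concatenated) *)
Lemma block_idx_lt (n k : nat) (i : 'I_k) (j : 'I_n) : (i * n + j < n * k)%N.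
Proof.
case: i => i /= hi; case: j => j /= hj.
apply: (@leq_trans (i * n + n)%N); first by rewrite ltn_add2l.
by rewrite -mulSnr mulnC leq_mul2l hi orbT.
Qed.

Definition block (T : Type) (n k : nat) (w : (n * k).-tuple T) (i : 'I_k)
  : n.-tuple T :=
  [tuple tnth w (Ordinal (block_idx_lt i j)) | j < n].
Arguments block {T n k} w i.

Definition Sev (T : Type) (R : realType) (n : nat) (A : set (n.-tuple T))
  (I : interval R) (k : nat) : set ((n * k).-tuple T) :=
  [set w | (k%:R^-1 * \sum_(i < k) (\1_A (block w i) : R)) \in I].
Arguments Sev {T R n} A I k.

(* a class of extended events, given by its components C n at each level *)
Definition xclass d (T : measurableType d) := forall n : nat, set (set (n.-tuple T)).

Definition is_Cclass d (T : measurableType d) (C : xclass T) : Prop :=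
  forall n : nat, (0 < n)%N ->
    [/\ (forall A, C n A -> measurable A),
        C n setT,
        (forall A B, C n A -> measurable B -> A `<=` B -> C n B) &
        (forall A B, C n A -> C n B -> A `&` B <> set0)].

Definition definitively_in d (T : measurableType d) (R : realType)
  (C : xclass T) (n : nat) (A : set (n.-tuple T)) (s : R) : Prop :=
  exists k0 : nat, forall k : nat, (k0 < k)%N ->
    C (n * k)%N (Sev A (Interval (BLeft s) (BRight 1)) k).

Definition Cmeasure d (T : measurableType d) (R : realType)
  (C : xclass T) (n : nat) (A : set (n.-tuple T)) : \bar R :=
  ereal_sup [set (s%:E)%E | s in [set s : R | 0 <= s <= 1 /\
                                   definitively_in C A s]].

Definition Tclass d (T : measurableType d) (R : realType)
  (P : probability T R) (delta : R) : xclass T :=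
  fun n A => measurable A /\ (delta%:E <= prodP P A)%E.
Arguments Tclass {d T R} P delta n A.
Arguments Cmeasure {d T R} C {n} A.

(* Main.v *)
Require Import Defs.
From HB Require Import structures.
From mathcomp Require Import all_boot all_order all_algebra.
From mathcomp Require Import all_classical all_reals all_analysis.
From mathcomp Require Import measurable_realfun.
From mathcomp Require Import ring lra.
Import Order.TTheory GRing.Theory Num.Theory.
Local Open Scope classical_set_scope.
Local Open Scope ring_scope.
Section Ex.
Context d (T : measurableType d) (R : realType) (P : probability T R).
Local Open Scope ereal_scope.

Fixpoint Ex (n : nat) : (n.-tuple T -> \bar R) -> \bar R :=
  match n as m return (m.-tuple T -> \bar R) -> \bar R with
  | 0 => fun f => f [tuple]
  | m.+1 => fun f => \int[P]_x Ex m (fun t => f (cons_tuple x t))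
  end.

Lemma Ex_ge0 n f : (forall t, 0 <= f t) -> 0 <= Ex n f.
Proof.
elim: n f => [|n IH] f f0 /=; first exact: f0.
by apply: integral_ge0 => x _; apply: IH.
Qed.

Lemma Ex_meas n d' (Y : measurableType d') (f : Y * n.-tuple T -> \bar R) :
  (forall z, 0 <= f z) -> measurable_fun [set: Y * n.-tuple T] f ->
  measurable_fun setT (fun y => Ex n (fun t => f (y, t))).
Proof.
elim: n d' Y f => [|n IH] d' Y f f0 mf /=.
  apply: (measurableT_comp mf).
  by apply: measurable_fun_pair => //; exact: measurable_cst.
pose g := fun z : (Y * T) * n.-tuple T => f (z.1.1, cons_tuple z.1.2 z.2).
have mg : measurable_fun setT g.
  apply: (measurableT_comp mf); apply: measurable_fun_pair.
    by apply: measurableT_comp => //.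
  apply: (@measurable_cons _ _ _ _ (fun z : (Y * T) * n.-tuple T => z.1.2)
           n (fun z => z.2)) => //.
  exact: (measurableT_comp measurable_snd measurable_fst).
  exact: measurable_snd.
have := IH _ _ g (fun z => f0 _) mg.
move=> /(measurable_fun_fubini_tonelli_F _) => H.
exact: (H P (fun z => Ex_ge0 n _ (fun t => f0 _))).
Qed.
End Ex.
Section Ex2.
Context d (T : measurableType d) (R : realType) (P : probability T R).
Local Open Scope ereal_scope.
Notation Ex := (@Ex _ _ _ P).

Lemma meas_cons1 n (x : T) :
  measurable_fun [set: n.-tuple T] (fun t => cons_tuple x t).
Proof.
apply: (@measurable_cons _ _ _ _ (fun _ => x) n (fun t => t)).
  exact: measurable_cst. exact: measurable_id.
Qed.

Lemma meas_cons2 n :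
  measurable_fun [set: T * n.-tuple T] (fun z => cons_tuple z.1 z.2).
Proof.
apply: (@measurable_cons _ _ _ _ (fun z : T * n.-tuple T => z.1) n (fun z => z.2)).
  exact: measurable_fst. exact: measurable_snd.
Qed.

Lemma Ex_meas_cons n (f : n.+1.-tuple T -> \bar R) :
  (forall t, 0 <= f t) -> measurable_fun setT f ->
  measurable_fun setT (fun x => Ex n (fun t => f (cons_tuple x t))).
Proof.
move=> f0 mf.
exact: (@Ex_meas d T R P n _ _ (fun z : T * n.-tuple T => f (cons_tuple z.1 z.2))
   (fun z => f0 _) (measurableT_comp mf (meas_cons2 n))).
Qed.

Lemma ExD n (f g : n.-tuple T -> \bar R) :
  (forall t, 0 <= f t) -> measurable_fun setT f ->
  (forall t, 0 <= g t) -> measurable_fun setT g ->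
  Ex n (fun t => f t + g t) = Ex n f + Ex n g.
Proof.
elim: n f g => [|n IH] f g f0 mf g0 mg //=.
rewrite -ge0_integralD //; try (by move=> x _; apply: Ex_ge0);
  try (by apply: Ex_meas_cons).
apply: eq_integral => x _; apply: IH => //.
- exact: measurableT_comp mf (meas_cons1 n x).
- exact: measurableT_comp mg (meas_cons1 n x).
Qed.

Lemma ExZ n (c : R) (f : n.-tuple T -> \bar R) : (0 <= c)%R ->
  (forall t, 0 <= f t) -> measurable_fun setT f ->
  Ex n (fun t => c%:E * f t) = c%:E * Ex n f.
Proof.
move=> c0; elim: n f => [|n IH] f f0 mf //=.
rewrite -ge0_integralZl_EFin //; try (by move=> x _; apply: Ex_ge0);
  try (by apply: Ex_meas_cons).
apply: eq_integral => x _; apply: IH => //.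
exact: measurableT_comp mf (meas_cons1 n x).
Qed.

Lemma Ex_cst n (c : \bar R) : Ex n (fun _ => c) = c.
Proof.
elim: n => [|n IH] //=.
under eq_integral do rewrite IH.
have H1 : (P : {measure set T -> \bar R}) setT = 1 := probability_setT P.
by rewrite integral_cst // H1 mule1.
Qed.

Lemma Ex_le n (f g : n.-tuple T -> \bar R) :
  (forall t, 0 <= f t) -> measurable_fun setT f -> measurable_fun setT g ->
  (forall t, f t <= g t) -> Ex n f <= Ex n g.
Proof.
elim: n f g => [|n IH] f g f0 mf mg fg //=.
have g0 : forall t, 0 <= g t by move=> t; exact: le_trans (f0 t) (fg t).
apply: ge0_le_integral => //; try (by move=> x _; apply: Ex_ge0);
  try (by apply: Ex_meas_cons).
move=> x _; apply: IH => //.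
- exact: measurableT_comp mf (meas_cons1 n x).
- exact: measurableT_comp mg (meas_cons1 n x).
Qed.

End Ex2.
Section Ex3.
Context d (T : measurableType d) (R : realType) (P : probability T R).
Local Open Scope ereal_scope.
Notation Ex := (@Ex _ _ _ P).

Lemma Ex_ind n (A : set (n.-tuple T)) :
  Ex n (fun t => (\1_A t : R)%:E) = prodP P A.
Proof.
elim: n A => [|n IH] A //=.
by apply: eq_integral => x _; rewrite -IH.
Qed.

Lemma Ex_cat n M (h : (n + M).-tuple T -> \bar R) :
  Ex (n + M) h = Ex n (fun u => Ex M (fun v => h (cat_tuple u v))).
Proof.
elim: n h => [|n IH] h /=.
  congr (Ex M _); apply: funext => v; congr h; exact: val_inj.
apply: eq_integral => x _; rewrite IH.
congr (Ex n _); apply: funext => u; congr (Ex M _); apply: funext => v.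
by congr h; apply: val_inj.
Qed.

Lemma Ex_cast a b (e : a = b) (f : b.-tuple T -> \bar R) :
  Ex b f = Ex a (fun t => f (tcast e t)).
Proof.
case: b / e in f *; congr (Ex a _); apply: funext => t; by rewrite tcast_id.
Qed.
End Ex3.
Section Sk.
Context d (T : measurableType d) (R : realType).

Definition Sk n (A : set (n.-tuple T)) k (w : (n * k).-tuple T) : R :=
  \sum_(i < k) (\1_A (block w i) : R).
Arguments Sk {n} A k w.

Lemma meas_block n k (i : 'I_k) :
  measurable_fun [set: (n * k).-tuple T] (fun w => block w i).
Proof.
apply/measurable_fun_tnthP => j /=.
rewrite (_ : _ \o _ = (fun w => tnth w (Ordinal (block_idx_lt i j)))); last first.
  by apply: funext => w /=; rewrite /block tnth_mktuple.
exact: measurable_tnth.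
Qed.

Lemma meas_Sk n (A : set (n.-tuple T)) k : measurable A ->
  measurable_fun [set: (n * k).-tuple T] (Sk A k).
Proof.
move=> mA; apply: measurable_sum => i.
apply: measurableT_comp; [exact: measurable_indic | exact: meas_block].
Qed.

Lemma Sk_ge0 n (A : set (n.-tuple T)) k w : 0 <= Sk A k w.
Proof. by apply: sumr_ge0 => i _; rewrite indicE. Qed.

Lemma Sk_le n (A : set (n.-tuple T)) k w : Sk A k w <= k%:R.
Proof.
rewrite /Sk -[k in k%:R]card_ord -sumr_const.
by apply: ler_sum => i _; rewrite indicE; case: (_ \in _).
Qed.

Lemma Sk_rec n (A : set (n.-tuple T)) k u v :
  Sk A k.+1 (tcast (esym (mulnS n k)) (cat_tuple u v)) = \1_A u + Sk A k v.
Proof.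
rewrite /Sk big_ord_recl; congr (\1_A _ + _).
  apply: eq_from_tnth => j; rewrite /block tnth_mktuple tcastE.
  rewrite -(tnth_lshift u v); congr tnth; apply: val_inj => /=.
  by rewrite mul0n add0n.
apply: eq_bigr => i _; congr (\1_A _).
apply: eq_from_tnth => j; rewrite /block !tnth_mktuple tcastE.
rewrite -(tnth_rshift u v); congr tnth; apply: val_inj => /=.
by rewrite /bump /= add1n mulSn addnA.
Qed.
End Sk.
Arguments Sk {d T R n} A k w.
Section Moments.
Context d (T : measurableType d) (R : realType) (P : probability T R).
Context (n : nat) (A : set (n.-tuple T)) (mA : measurable A).
Local Open Scope ereal_scope.
Notation Ex := (@Ex _ _ _ P).

Lemma mEFin m (g : m.-tuple T -> R) : measurable_fun setT g ->
  measurable_fun setT (fun t => (g t)%:E).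
Proof. by move=> mg; apply/measurable_EFinP. Qed.

Lemma mcst m (c : \bar R) : measurable_fun [set: m.-tuple T] (fun _ => c).
Proof. exact: measurable_cst. Qed.

Lemma Ex_indic_le1 : 0 <= Ex n (fun u => (\1_A u : R)%:E) <= 1.
Proof.
apply/andP; split; first by apply: Ex_ge0 => t; rewrite lee_fin indicE.
rewrite -[leRHS](@Ex_cst _ _ _ P n); apply: Ex_le.
- by move=> t; rewrite lee_fin indicE.
- by apply: mEFin; exact: measurable_indic.
- exact: mcst.
- by move=> t; rewrite lee_fin indicE; case: (_ \in _).
Qed.

Definition pA := fine (Ex n (fun u => (\1_A u : R)%:E)).

Lemma EX : Ex n (fun u => (\1_A u : R)%:E) = pA%:E.
Proof.
have /andP[h0 h1] := Ex_indic_le1.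
rewrite /pA fineK // ge0_fin_numE //.
exact: le_lt_trans h1 (ltry 1%R).
Qed.

Lemma pA_ge0 : (0 <= pA)%R.
Proof. by have /andP[+ _] := Ex_indic_le1; rewrite EX lee_fin. Qed.
Lemma pA_le1 : (pA <= 1)%R.
Proof. by have /andP[_ +] := Ex_indic_le1; rewrite EX lee_fin. Qed.

Ltac nonneg := (try move=> ?); rewrite ?lee_fin; (repeat first [apply: sqr_ge0 | apply: mulr_ge0 | apply: addr_ge0 | apply: Sk_ge0 | apply: pA_ge0 | apply: ler0n | (rewrite indicE; by case: (_ \in _)) ]); done.
Ltac meas := first [exact: mcst | apply: mEFin; (repeat first [exact: measurable_cst | exact: measurable_indic | exact: meas_Sk | apply: measurable_funD | apply: measurable_funM | apply: measurable_funX | apply: measurable_funB]); done].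
Ltac side := try solve [nonneg | meas].

Lemma M1 k : Ex (n * k) (fun w => (Sk A k w)%:E) = (k%:R * pA)%:E.
Proof.
elim: k => [|k IH].
  rewrite (_ : (fun w => _) = fun _ => 0%:E); last first.
    by apply: funext => w; rewrite /Sk big_ord0.
  by rewrite Ex_cst mul0r.
rewrite (@Ex_cast _ _ _ P _ _ (esym (mulnS n k))) Ex_cat.
have H u : Ex (n * k) (fun v => (Sk A k.+1 (tcast (esym (mulnS n k)) (cat_tuple u v)))%:E)
    = (\1_A u : R)%:E + (k%:R * pA)%:E.
  rewrite (_ : (fun v => _) = fun v => (\1_A u : R)%:E + (Sk A k v)%:E); last first.
    by apply: funext => v; rewrite Sk_rec EFinD.
  by rewrite ExD ?Ex_cst ?IH //; side.
rewrite (_ : (fun u => _) = fun u => (\1_A u : R)%:E + (k%:R * pA)%:E); last first.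
  by apply: funext => u; rewrite H.
rewrite ExD ?Ex_cst ?EX //; side.
by rewrite -EFinD -natr1; congr EFin; ring.
Qed.

Definition m2 (k : nat) : R := (k%:R * pA + k%:R * (k%:R - 1) * pA ^+ 2)%R.

Lemma indic2 (u : n.-tuple T) : ((\1_A u : R) ^+ 2 = \1_A u)%R.
Proof. by rewrite indicE; case: (_ \in _); rewrite /= ?expr1n ?expr0n. Qed.

Lemma M2 k : Ex (n * k) (fun w => (Sk A k w ^+ 2)%:E) = (m2 k)%:E.
Proof.
elim: k => [|k IH].
  rewrite (_ : (fun w => _) = fun _ => 0%:E); last first.
    by apply: funext => w; rewrite /Sk big_ord0 expr2 mul0r.
  by rewrite Ex_cst /m2 !mul0r addr0.
rewrite (@Ex_cast _ _ _ P _ _ (esym (mulnS n k))) Ex_cat.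
have H u : Ex (n * k)
    (fun v => ((Sk A k.+1 (tcast (esym (mulnS n k)) (cat_tuple u v))) ^+ 2)%:E)
    = ((\1_A u : R) * (1 + 2 * (k%:R * pA)))%:E + (m2 k)%:E.
  rewrite (_ : (fun v => _) = fun v => ((\1_A u : R) ^+ 2)%:E +
     (((2 * \1_A u)%:E * (Sk A k v)%:E) + (Sk A k v ^+ 2)%:E)); last first.
    by apply: funext => v; rewrite Sk_rec -!EFinM -!EFinD; congr EFin; ring.
  rewrite ExD; side. rewrite Ex_cst ExD; side. rewrite ExZ; side. rewrite M1 IH.
  rewrite -EFinM addeA -!EFinD indic2; congr EFin; ring.
  side.
rewrite (_ : (fun u => _) = fun u => ((1 + 2 * (k%:R * pA))%:E * (\1_A u : R)%:E) + (m2 k)%:E); last first.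
  by apply: funext => u; rewrite H -EFinM mulrC.
rewrite ExD; side. rewrite ExZ; side. rewrite EX Ex_cst -EFinM -EFinD; congr EFin.
  by rewrite /m2 -natr1; ring.
by move=> _; rewrite -IH; apply: Ex_ge0 => t; rewrite lee_fin sqr_ge0.
Qed.

Lemma Var k : Ex (n * k) (fun w => ((Sk A k w - k%:R * pA) ^+ 2)%:E) =
  (k%:R * pA - k%:R * pA ^+ 2)%:E.
Proof.
set V := Ex _ _.
have E1 : Ex (n * k) (fun w => ((Sk A k w - k%:R * pA) ^+ 2)%:E +
             (2 * (k%:R * pA))%:E * (Sk A k w)%:E) =
          Ex (n * k) (fun w => (Sk A k w ^+ 2)%:E + ((k%:R * pA) ^+ 2)%:E).
  congr (Ex _ _); apply: funext => w; rewrite -EFinM -!EFinD; congr EFin; ring.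
have cp : (0 <= 2 * (k%:R * pA))%R by rewrite mulr_ge0 // mulr_ge0 ?pA_ge0.
rewrite ExD in E1; side.
rewrite ExZ in E1; side.
rewrite M1 ExD in E1; side.
rewrite M2 Ex_cst in E1.
have V0 : 0 <= V by apply: Ex_ge0 => w; rewrite lee_fin sqr_ge0.
rewrite -/V in E1; clearbody V; case: V E1 V0 => [r| |] E1 V0 //.
congr EFin; move: E1; rewrite -EFinM -!EFinD; case=> E2.
have -> : r = (m2 k + (k%:R * pA) ^+ 2 - 2 * (k%:R * pA) * (k%:R * pA))%R.
  by rewrite -E2; ring.
rewrite /m2; ring.
Qed.

End Moments.
Section Cheb.
Context d (T : measurableType d) (R : realType) (P : probability T R).
Local Open Scope ereal_scope.
Notation Ex := (@Ex _ _ _ P).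
Notation pA := (@pA _ _ _ P _).

Lemma prodP_pA m (B : set (m.-tuple T)) : measurable B -> prodP P B = (pA B)%:E.
Proof. by move=> mB; rewrite -Ex_ind (@EX _ _ _ P _ _ mB). Qed.

Lemma pA_le m (B B' : set (m.-tuple T)) : measurable B -> measurable B' ->
  B `<=` B' -> (pA B <= pA B')%R.
Proof.
move=> mB mB' BB; rewrite -lee_fin -(@EX _ _ _ P _ _ mB) -(@EX _ _ _ P _ _ mB').
apply: Ex_le.
- by move=> t; rewrite lee_fin indicE.
- by apply: mEFin; exact: measurable_indic.
- by apply: mEFin; exact: measurable_indic.
- move=> t; rewrite lee_fin !indicE.
  case: (boolP (t \in B)) => [/set_mem/BB/mem_set -> //|_].
  by case: (_ \in _).
Qed.

Lemma pAC m (B : set (m.-tuple T)) : measurable B -> pA (~` B) = (1 - pA B)%R.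
Proof.
move=> mB.
have mC : measurable (~` B) by exact: measurableC.
have H : Ex m (fun t => (\1_(~` B) t : R)%:E + (\1_B t : R)%:E) = 1.
  rewrite -[RHS](@Ex_cst _ _ _ P m); congr (Ex _ _); apply: funext => t.
  by rewrite -EFinD indicC indicE /=; case: (t \in B); rewrite /= ?add0r ?addr0.
rewrite ExD in H; last 4 first.
- by move=> t; rewrite lee_fin indicE.
- by apply: mEFin; exact: measurable_indic.
- by move=> t; rewrite lee_fin indicE.
- by apply: mEFin; exact: measurable_indic.
move: H; rewrite (@EX _ _ _ P _ _ mC) (@EX _ _ _ P _ _ mB) -EFinD; case=> H.
by rewrite -H addrK.
Qed.

Lemma pA_disj m (B B' : set (m.-tuple T)) : measurable B -> measurable B' ->
  B `&` B' = set0 -> (pA B + pA B' <= 1)%R.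
Proof.
move=> mB mB' BB.
rewrite -lee_fin EFinD -(@EX _ _ _ P _ _ mB) -(@EX _ _ _ P _ _ mB') -ExD; last 4 first.
- by move=> t; rewrite lee_fin indicE.
- by apply: mEFin; exact: measurable_indic.
- by move=> t; rewrite lee_fin indicE.
- by apply: mEFin; exact: measurable_indic.
rewrite -[leRHS](@Ex_cst _ _ _ P m); apply: Ex_le.
- by move=> t; apply: adde_ge0; rewrite lee_fin indicE.
- by apply: emeasurable_funD; apply: mEFin; exact: measurable_indic.
- exact: mcst.
- move=> t; rewrite -EFinD lee_fin !indicE.
  case: (boolP (t \in B)) => [/set_mem tB|]; case: (boolP (t \in B')) => [/set_mem tB'|] //=;
    try by rewrite ?add0r ?addr0.
  have : (B `&` B') t by [].
  by rewrite BB.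
Qed.

Context (n : nat) (A : set (n.-tuple T)) (mA : measurable A).

Definition Bk k (eps : R) : set ((n * k).-tuple T) :=
  [set w | ((k%:R * eps) ^+ 2 <= (Sk A k w - k%:R * pA A) ^+ 2)%R].

Lemma mBk k eps : measurable (Bk k eps).
Proof.
have mg : measurable_fun [set: (n * k).-tuple T]
    (fun w => (Sk A k w - k%:R * pA A) ^+ 2)%R.
  apply: measurable_funX; apply: measurable_funB; first exact: meas_Sk.
  exact: measurable_cst.
have := mg measurableT _ (measurable_itv `[((k%:R * eps) ^+ 2)%R, +oo[).
rewrite setTI; congr measurable; apply/seteqP; split => w /=;
  by rewrite /Bk in_itv /= andbT.
Qed.

Lemma cheb k eps : (0 < k)%N -> (0 < eps)%R ->
  (pA (Bk k eps) <= (k%:R * eps ^+ 2)^-1)%R.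
Proof.
move=> k0 e0.
have kpos : (0 < k%:R :> R)%R by rewrite ltr0n.
have h : Ex (n * k) (fun w => (((k%:R * eps) ^+ 2) * \1_(Bk k eps) w)%:E)
   <= Ex (n * k) (fun w => ((Sk A k w - k%:R * pA A) ^+ 2)%:E).
  apply: Ex_le.
  - by move=> t; rewrite lee_fin mulr_ge0 ?sqr_ge0 // indicE.
  - apply: mEFin; apply: measurable_funM; first exact: measurable_cst.
    by apply: measurable_indic; exact: mBk.
  - apply: mEFin; apply: measurable_funX; apply: measurable_funB.
      exact: meas_Sk.
    exact: measurable_cst.
  - move=> t; rewrite lee_fin indicE; case: (boolP (t \in Bk k eps)) => [tB|] /=.
      by rewrite mulr1; move/set_mem: tB.
    by rewrite mulr0 sqr_ge0.
rewrite (@Var _ _ _ P _ _ mA) in h.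
rewrite (_ : (fun w => _) = (fun w => ((k%:R * eps) ^+ 2)%:E * (\1_(Bk k eps) w : R)%:E)) in h;
  last by apply: funext => w; rewrite EFinM.
rewrite ExZ in h; last 3 first.
- exact: sqr_ge0.
- by move=> t; rewrite lee_fin indicE.
- by apply: mEFin; apply: measurable_indic; exact: mBk.
rewrite (@EX _ _ _ P _ _ (mBk k eps)) -EFinM lee_fin in h.
have p0 := @pA_ge0 _ _ _ P _ _ mA; have p1 := @pA_le1 _ _ _ P _ _ mA.
have q0 := @pA_ge0 _ _ _ P _ _ (mBk k eps).
set q := pA (Bk k eps) in h q0 *.
set p := pA A in h p0 p1.
have h2 : ((k%:R * eps) ^+ 2 * q <= k%:R)%R.
  apply: le_trans h _.
  have kp : (0 <= k%:R :> R)%R by rewrite ler0n.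
  by nra.
have kepos : (0 < k%:R * eps ^+ 2)%R by rewrite mulr_gt0 // exprn_gt0.
rewrite -[X in (_ <= X)%R]mulr1 ler_pdivlMl //.
rewrite -(ler_pM2l kpos) mulr1.
by apply: le_trans h2; rewrite le_eqVlt; apply/orP; left; apply/eqP; ring.
Qed.

Lemma good k eps : (0 < k)%N -> (0 < eps)%R ->
  (1 - (k%:R * eps ^+ 2)^-1 <= pA (~` Bk k eps))%R.
Proof.
move=> k0 e0; rewrite pAC; last exact: mBk.
by rewrite lerB // cheb.
Qed.

End Cheb.
Lemma sq_ltN (R : realType) (a b : R) : (a ^+ 2 < b ^+ 2 -> 0 <= b -> - b < a)%R.
Proof. move=> h hb; nra. Qed.
Arguments sq_ltN {R a b}.
Lemma sq_ltP (R : realType) (a b : R) : (a ^+ 2 < b ^+ 2 -> 0 <= b -> a < b)%R.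
Proof. move=> h hb; nra. Qed.

Arguments sq_ltP {R a b}.
Section Final.
Context d (T : measurableType d) (R : realType) (P : probability T R).
Context (delta : R) (hd1 : (delta < 1)%R).
Local Open Scope ereal_scope.
Notation Ex := (@Ex _ _ _ P).
Notation pA := (@pA _ _ _ P _).

Lemma k0_exists (eps : R) : (0 < eps)%R -> exists k0 : nat,
  forall k, (k0 < k)%N -> (delta < 1 - (k%:R * eps ^+ 2)^-1)%R.
Proof.
move=> e0.
have w0 : (0 < (1 - delta) * eps ^+ 2)%R by rewrite mulr_gt0 ?subr_gt0 // exprn_gt0.
exists (Num.Def.trunc (((1 - delta) * eps ^+ 2)^-1)) => k hk.
have hx := truncnS_gt (((1 - delta) * eps ^+ 2)^-1).
have hk' : ((Num.Def.trunc (((1 - delta) * eps ^+ 2)^-1)).+1%:R <= k%:R :> R)%R.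
  by rewrite ler_nat.
have h1 : (((1 - delta) * eps ^+ 2)^-1 < k%:R)%R by exact: lt_le_trans hx hk'.
have kpos : (0 < k%:R * eps ^+ 2)%R.
  rewrite mulr_gt0 // ?exprn_gt0 //.
  apply: le_lt_trans h1; rewrite invr_ge0; exact: ltW.
rewrite -[X in (X < _)%R]mulr1 ltr_pdivrMl // in h1.
have h3 : ((k%:R * eps ^+ 2)^-1 < 1 - delta)%R.
  rewrite -[X in (X < _)%R]mulr1 ltr_pdivrMl //.
  by nra.
by lra.
Qed.

Lemma mSev n (A : set (n.-tuple T)) (mA : measurable A) (I : interval R) k :
  measurable (Sev A I k).
Proof.
have mg : measurable_fun [set: (n * k).-tuple T] (fun w => (k%:R^-1 : R) * Sk A k w)%R.
  have hS : measurable_fun [set: (n * k).-tuple T] (Sk A k) := @meas_Sk d T R n A k mA.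
  exact: (measurable_funM (measurable_cst (k%:R^-1 : R)%R) hS).
have := mg measurableT _ (measurable_itv I).
by rewrite setTI.
Qed.

Lemma prodP_setT m : prodP P [set: m.-tuple T] = 1.
Proof.
rewrite -Ex_ind (_ : (fun t => _) = fun _ => 1); first exact: Ex_cst.
by apply: funext => t; rewrite indicE in_setT.
Qed.

Lemma Zero n (A : set (n.-tuple T)) (mA : measurable A) k : (0 < k)%N ->
  Tclass P delta (n * k)%N (Sev A (`[0%R, 1%R] : interval R) k).
Proof.
move=> k0; split; first exact: mSev.
rewrite (_ : Sev A _ k = setT) ?prodP_setT ?lee_fin ?(ltW hd1) //.
apply/seteqP; split => // w _; rewrite /Sev /= in_itv /=.
have kpos : (0 < k%:R :> R)%R by rewrite ltr0n.
rewrite mulr_ge0 ?invr_ge0 ?ler0n ?Sk_ge0 //=.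
by rewrite ler_pdivrMl // mulr1 Sk_le.
Qed.

Lemma LB n (A : set (n.-tuple T)) (mA : measurable A) (s : R) :
  (0 <= s)%R -> (s < pA A)%R -> exists k0 : nat, forall k, (k0 < k)%N ->
  Tclass P delta (n * k)%N (Sev A `[s, 1%R] k).
Proof.
move=> s0 sp.
have e0 : (0 < pA A - s)%R by rewrite subr_gt0.
have [k0 hk0] := k0_exists _ e0.
exists k0 => k hk; split; first exact: mSev.
have k0' : (0 < k)%N by apply: leq_ltn_trans hk.
have kpos : (0 < k%:R :> R)%R by rewrite ltr0n.
rewrite (@prodP_pA _ _ _ P _ _ (@mSev _ _ mA _ _)) lee_fin.
apply: (le_trans (ltW (hk0 k hk))); apply: le_trans (@good _ _ _ P _ _ mA _ _ k0' e0) _.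
apply: pA_le; [apply: measurableC; exact: mBk|exact: mSev|].
move=> w /=; rewrite /Bk /= => /negP; rewrite -ltNge => hw.
rewrite /Sev /= in_itv /=; apply/andP; split.
  rewrite ler_pdivlMl //.
  have p1 := @pA_le1 _ _ _ P _ _ mA.
  set p := pA A in hw e0 sp p1 *; set S := Sk A k w in hw *.
  have := sq_ltN hw (ltW (mulr_gt0 kpos e0)).
  have -> : (\sum_(i < k) (\1_A (block w i) : R))%R = S by [].
  by lra.
by rewrite ler_pdivrMl // mulr1 Sk_le.
Qed.

Lemma UB n (A : set (n.-tuple T)) (mA : measurable A) (s : R) :
  (pA A < s)%R -> exists k0 : nat, forall k, (k0 < k)%N -> exists G,
  Tclass P delta (n * k)%N G /\ G `&` Sev A `[s, 1%R] k = set0.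
Proof.
move=> sp.
have e0 : (0 < s - pA A)%R by rewrite subr_gt0.
have [k0 hk0] := k0_exists _ e0.
exists k0 => k hk.
have k0' : (0 < k)%N by apply: leq_ltn_trans hk.
have kpos : (0 < k%:R :> R)%R by rewrite ltr0n.
exists (~` @Bk _ _ _ P _ A k (s - pA A)); split.
  split; first by apply: measurableC; exact: mBk.
  rewrite (@prodP_pA _ _ _ P _ _ (measurableC (@mBk _ _ _ P _ A mA _ _))) lee_fin.
  exact: (le_trans (ltW (hk0 k hk)) (@good _ _ _ P _ _ mA _ _ k0' e0)).
apply/seteqP; split => // w [] /= /negP; rewrite /Bk -ltNge => hw.
rewrite /Sev /= in_itv /= => /andP[+ _].
rewrite ler_pdivlMl //.
set p := pA A in hw e0 sp *; set S := Sk A k w in hw *.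
have -> : (\sum_(i < k) (\1_A (block w i) : R))%R = S by [].
move=> h; have := sq_ltP hw (ltW (mulr_gt0 kpos e0)).
by lra.
Qed.

Lemma Cmeas_eq (C : xclass T) n (A : set (n.-tuple T)) : (0 < n)%N ->
  measurable A ->
  (forall m, (0 < m)%N -> forall X, Tclass P delta m X -> C m X) ->
  (forall m, (0 < m)%N -> forall X Y, C m X -> Tclass P delta m Y ->
      X `&` Y <> set0) ->
  Cmeasure C A = prodP P A.
Proof.
move=> n0 mA hTC hdis.
rewrite (@prodP_pA _ _ _ P _ _ mA).
have p0 := @pA_ge0 _ _ _ P _ _ mA; have p1 := @pA_le1 _ _ _ P _ _ mA.
set p := pA A in p0 p1 *.
rewrite /Cmeasure; set S := (X in ereal_sup [set _%:E | _ in X]).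
have inS0 : S 0%R.
  split; first by rewrite lexx ler01.
  exists 0%N => k k0; apply: hTC; first by rewrite muln_gt0 n0.
  exact: Zero.
have inS s : (0 <= s)%R -> (s < p)%R -> S s.
  move=> s0 sp; split; first by rewrite s0 /= (le_trans (ltW sp) p1).
  have [k0 hk0] := @LB _ _ mA _ s0 sp.
  exists k0 => k hk; apply: hTC; last exact: hk0.
  by rewrite muln_gt0 n0 (leq_ltn_trans _ hk).
have ubS s : S s -> (s <= p)%R.
  move=> [_ [k1 hk1]]; rewrite leNgt; apply/negP => ps.
  have [k0 hk0] := @UB _ _ mA _ ps.
  have l0 : (k0 < (maxn k0 k1).+1)%N by rewrite ltnS leq_maxl.
  have l1 : (k1 < (maxn k0 k1).+1)%N by rewrite ltnS leq_maxr.
  have hk := hk0 _ l0.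
  have hk' := hk1 _ l1.
  have [G [TG GS]] := hk.
  apply: (hdis _ _ _ _ hk' TG); first by rewrite muln_gt0 n0.
  by rewrite setIC.
apply/eqP; rewrite eq_le; apply/andP; split.
  apply: ge_ereal_sup => _ [s Ss <-]; rewrite lee_fin; exact: ubS.
have sup0 : 0 <= ereal_sup [set x%:E | x in S].
  by apply: ereal_sup_ubound; exists 0%R.
move: sup0; case E : (ereal_sup _) => [r| |] // r0; last by rewrite leey.
rewrite lee_fin leNgt; apply/negP => rp.
have hm : ((r + p) / 2)%R%:E <= r%:E.
  rewrite -E; apply: ereal_sup_ubound; exists ((r + p) / 2)%R => //.
  apply: inS.
    rewrite lee_fin in r0; apply: divr_ge0 => //; exact: addr_ge0.
  by rewrite ltr_pdivrMr // -subr_gt0; rewrite mulr2n mulrDr mulr1; lra.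
move: hm; rewrite lee_fin => hm.
lra.
Qed.

End Final.

Theorem theorem1 (d : measure_display) (T : measurableType d) (R : realType)
  (P : probability T R) (delta : R) (C : xclass T) :
  2^-1 < delta < 1 ->
  is_Cclass C ->
  (forall n : nat, (0 < n)%N -> forall A : set (n.-tuple T),
      Tclass P delta n A -> C n A) ->
  (forall n : nat, (0 < n)%N -> forall A : set (n.-tuple T), measurable A ->
      @Cmeasure _ _ R (Tclass P delta) n A = @Cmeasure _ _ R C n A)
  /\
  (forall n : nat, (0 < n)%N -> forall A : set (n.-tuple T), measurable A ->
      Cmeasure C A = prodP P A).
Proof.
move=> /andP[hd0 hd1] hC hTC.
have hdisC : forall m, (0 < m)%N -> forall X Y, C m X -> Tclass P delta m Y ->
    X `&` Y <> set0.
  move=> m m0 X Y CX TY; have [_ _ _ h4] := hC m m0.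
  exact: h4 CX (hTC m m0 Y TY).
have hdisT : forall m, (0 < m)%N -> forall X Y, Tclass P delta m X ->
    Tclass P delta m Y -> X `&` Y <> set0.
  move=> m m0 X Y [mX hX] [mY hY] XY.
  have := @pA_disj _ _ _ P _ _ _ mX mY XY.
  rewrite (@prodP_pA _ _ _ P _ _ mX) lee_fin in hX.
  rewrite (@prodP_pA _ _ _ P _ _ mY) lee_fin in hY.
  by lra.
split.
- move=> n n0 A mA.
  rewrite (@Cmeas_eq d T R P delta hd1 (Tclass P delta) n A n0 mA (fun m _ X h => h) hdisT).
  by rewrite (@Cmeas_eq d T R P delta hd1 C n A n0 mA hTC hdisC).
- move=> n n0 A mA.
  exact: (@Cmeas_eq d T R P delta hd1 C n A n0 mA hTC hdisC).
Qed.
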